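(* Let $d\ge2$, let $(c_t)_{t\ge0}\subset\mathbb{S}^d$ be an arbitrary sequence of unit vectors, and let $\omega:\mathrm{P}^d_+\to\mathbb{R}_{\ge0}$ satisfy $\omega(X)\le C\sqrt{\lambda_{\max}(X)}$ for all $X\in\mathrm{P}^d_+$, for some constant $C>0$. Let $$\lambda_0\ge\max\Big\{2,\ \sqrt{\tfrac{2}{3(d-1)}}\,2dC+\tfrac{2}{3(d-1)}\Big\},$$ and define $V_0=\lambda_0 I_{d\times d}$ and $V_{t+1}=V_t+\omega(V_t)\sum_{i=1}^{d-1}P_{t,i}$, where $$P_{t,i}=a^+_{t+1,i}(a^+_{t+1,i})^{\mathsf T}+a^-_{t+1,i}(a^-_{t+1,i})^{\mathsf T},\quad a^\pm_{t+1,i}=\frac{\tilde a^\pm_{t+1,i}}{\|\tilde a^\pm_{t+1,i}\|_2},\quad \tilde a^\pm_{t+1,i}=c_t\pm\frac{1}{\sqrt{\lambda_{t,1}}}v_{t,i},$$ with $\lambda_{t,1}\le\dots\le\lambda_{t,d}$ the eigenvalues of $V_t$ and $v_{t,1},\dots,v_{t,d}$ corresponding orthonormal eigenvectors (for any choice of such eigenvectors). Then $$\lambda_{\min}(V_t)\ge\sqrt{\tfrac{2}{3(d-1)}\lambda_{\max}(V_t)}\quad\text{for all }t\ge0.$$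
   Context: $\mathbb{S}^d=\{x\in\mathbb{R}^d:\|x\|_2=1\}$; $\mathrm{P}^d_+$ is the set of real symmetric positive semidefinite $d\times d$ matrices; $\lambda_{\min},\lambda_{\max}$ denote smallest and largest eigenvalues. *)

(* Defs.v *)
From HB Require Import structures.
From mathcomp Require Import all_boot all_order all_algebra.
From mathcomp Require Import all_classical all_reals.
Set Implicit Arguments. Unset Strict Implicit. Unset Printing Implicit Defensive.
Import Order.TTheory GRing.Theory Num.Theory.
Local Open Scope ring_scope.
Local Open Scope classical_set_scope.

Definition psd (R : realType) (d : nat) (X : 'M[R]_d) : Prop :=
  X^T = X /\ forall v : 'cV[R]_d, 0 <= (v^T *m X *m v) 0 0.

(* Smallest / largest eigenvalue of a square real matrix (intended for
   symmetric matrices, whose spectrum is a finite nonempty set of reals). *)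
Definition lmin (R : realType) (d : nat) (X : 'M[R]_d) : R :=
  inf [set a : R | eigenvalue X a].
Definition lmax (R : realType) (d : nat) (X : 'M[R]_d) : R :=
  sup [set a : R | eigenvalue X a].

Definition norm2 (R : realType) (d : nat) (x : 'cV[R]_d) : R :=
  Num.sqrt (\sum_(i < d) x i 0 ^+ 2).

Definition normalize (R : realType) (d : nat) (x : 'cV[R]_d) : 'cV[R]_d :=
  (norm2 x)^-1 *: x.

(* Main.v *)
Require Import Defs.
From HB Require Import structures.
From mathcomp Require Import all_boot all_order all_algebra.
From mathcomp Require Import all_classical all_reals.
From mathcomp Require Import ring lra.
Import Order.TTheory GRing.Theory Num.Theory.
Local Open Scope ring_scope.

Section Lin.
Context {R : realType}.
Context {k : nat}.
Implicit Types x y z : 'cV[R]_k.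

Definition dot x y : R := (x^T *m y) 0 0.

Lemma dotE x y : dot x y = \sum_i x i 0 * y i 0.
Proof. by rewrite /dot mxE; apply: eq_bigr => i _; rewrite mxE. Qed.

Lemma dotC x y : dot x y = dot y x.
Proof. by rewrite !dotE; apply: eq_bigr => i _; rewrite mulrC. Qed.

Lemma dotDr x y z : dot x (y + z) = dot x y + dot x z.
Proof. by rewrite /dot mulmxDr mxE. Qed.

Lemma dotBr x y z : dot x (y - z) = dot x y - dot x z.
Proof. by rewrite /dot mulmxBr !mxE. Qed.

Lemma dotZr a x y : dot x (a *: y) = a * dot x y.
Proof. by rewrite /dot -scalemxAr mxE. Qed.

Lemma dotDl x y z : dot (y + z) x = dot y x + dot z x.
Proof. by rewrite dotC dotDr !(dotC x). Qed.
Lemma dotBl x y z : dot (y - z) x = dot y x - dot z x.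
Proof. by rewrite dotC dotBr !(dotC x). Qed.
Lemma dotZl a x y : dot (a *: y) x = a * dot y x.
Proof. by rewrite dotC dotZr !(dotC x). Qed.

Lemma dot_ge0 x : 0 <= dot x x.
Proof. rewrite dotE; apply: sumr_ge0 => i _; by rewrite -expr2 sqr_ge0. Qed.

Lemma dot_eq0 x : dot x x = 0 -> x = 0.
Proof.
rewrite dotE => /eqP; rewrite psumr_eq0; last by move=> i _; by rewrite -expr2 sqr_ge0.
move=> /allP H; apply/matrixP => i j; rewrite (ord1 j) mxE.
by have := H i (mem_index_enum _); rewrite mulf_eq0 orbb => /eqP.
Qed.

Lemma dot_sum x (I : Type) (r : seq I) (P : pred I) (F : I -> 'cV[R]_k) :
  dot x (\sum_(i <- r | P i) F i) = \sum_(i <- r | P i) dot x (F i).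
Proof. by rewrite /dot mulmx_sumr summxE. Qed.

Lemma CS x y : dot x y ^+ 2 <= dot x x * dot y y.
Proof.
set a := dot y y; set b := dot x y; set c := dot x x.
have ha : 0 <= a by apply: dot_ge0.
have hc : 0 <= c by apply: dot_ge0.
have h1 : 0 <= dot (a *: x - b *: y) (a *: x - b *: y) by apply: dot_ge0.
rewrite !(dotBl, dotBr, dotZl, dotZr) -/a -/c (dotC y x) -/b in h1.
have h2 : 0 <= dot (c *: y - b *: x) (c *: y - b *: x) by apply: dot_ge0.
rewrite !(dotBl, dotBr, dotZl, dotZr) -/a -/c (dotC y x) -/b in h2.
have h3 : 0 <= dot (x + y) (x + y) by apply: dot_ge0.
rewrite !(dotDl, dotDr) -/a -/c (dotC y x) -/b in h3.
have h4 : 0 <= dot (x - y) (x - y) by apply: dot_ge0.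
rewrite !(dotBl, dotBr) -/a -/c (dotC y x) -/b in h4.
have [a0|apos] := eqVneq a 0.
  have [c0|cpos] := eqVneq c 0.
    rewrite a0 c0 in h3 h4 *; have -> : b = 0 by lra.
    by rewrite expr0n mulr0.
  have cp : 0 < c by rewrite lt_def cpos hc.
  nra.
have ap : 0 < a by rewrite lt_def apos ha.
nra.
Qed.

Lemma mul_cV1 x (m : 'M[R]_1) : x *m m = m 0 0 *: x.
Proof.
apply/matrixP => i j; rewrite (ord1 j) !mxE big_ord1 mulrC; congr (_ * _).
Qed.

Lemma dot_outer x a : dot x ((a *m a^T) *m x) = dot x a ^+ 2.
Proof.
rewrite -mulmxA mul_cV1 dotZr expr2; congr (_ * _).
by rewrite -/(dot a x) dotC.
Qed.

Lemma norm2_dot x : norm2 x = Num.sqrt (dot x x).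
Proof. by rewrite /norm2 dotE; congr Num.sqrt; apply: eq_bigr => i _; rewrite expr2. Qed.

Lemma dot_normalize x z :
  dot x (normalize z) ^+ 2 = dot x z ^+ 2 / dot z z.
Proof.
rewrite /normalize dotZr exprMn exprVn norm2_dot sqr_sqrtr ?dot_ge0 //.
by rewrite mulrC.
Qed.

Lemma dot_normalize_le1 z : dot (normalize z) (normalize z) <= 1.
Proof.
rewrite /normalize dotZl dotZr norm2_dot mulrA -expr2 exprVn sqr_sqrtr ?dot_ge0 //.
have [->|nz] := eqVneq (dot z z) 0; first by rewrite invr0 mul0r ler01.
by rewrite mulVf.
Qed.

End Lin.

Section Spec.
Variable R : realType.
Variable k : nat.
Variables (V Q : 'M[R]_k) (lam : 'I_k -> R).
Hypothesis HQ : Q^T *m Q = 1%:M.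
Hypothesis HV : forall i, V *m col i Q = lam i *: col i Q.

Lemma QQT : Q *m Q^T = 1%:M.
Proof. exact: mulmx1C. Qed.

Lemma dot_col i j : dot (col i Q) (col j Q) = (i == j)%:R.
Proof.
have := congr1 (fun M : 'M[R]_k => M i j) HQ; rewrite !mxE => <-.
by rewrite dotE; apply: eq_bigr => l _; rewrite !mxE.
Qed.

Lemma col_unit i : dot (col i Q) (col i Q) = 1.
Proof. by rewrite dot_col eqxx. Qed.

Lemma dot_trQ x w : dot x (Q *m w) = dot (Q^T *m x) w.
Proof. by rewrite /dot mulmxA trmx_mul trmxK. Qed.

Lemma VQ : V *m Q = Q *m diag_mx (\row_j lam j).
Proof.
apply/matrixP => i j; rewrite mul_mx_diag !mxE.
have := congr1 (fun M : 'cV[R]_k => M i 0) (HV j); rewrite !mxE mulrC => <-.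
by apply: eq_bigr => l _; rewrite !mxE.
Qed.

Lemma Vdec : V = Q *m diag_mx (\row_j lam j) *m Q^T.
Proof. by rewrite -VQ -mulmxA QQT mulmx1. Qed.

Lemma Vsym : V^T = V.
Proof. rewrite [in LHS]Vdec !trmx_mul trmxK tr_diag_mx mulmxA -Vdec. done. Qed.

Lemma yE x j : (Q^T *m x) j 0 = dot (col j Q) x.
Proof. by rewrite dotE mxE; apply: eq_bigr => l _; rewrite !mxE. Qed.

Lemma quadE x : dot x (V *m x) = \sum_j lam j * dot (col j Q) x ^+ 2.
Proof.
rewrite {1}Vdec -!mulmxA dot_trQ dotE; apply: eq_bigr => j _.
by rewrite yE mul_diag_mx mxE yE mxE expr2 mulrCA mulrA.
Qed.

Lemma normsum x : \sum_j dot (col j Q) x ^+ 2 = dot x x.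
Proof.
have -> : dot x x = dot x (Q *m (Q^T *m x)) by rewrite mulmxA QQT mul1mx.
by rewrite dot_trQ dotE; apply: eq_bigr => j _; rewrite yE expr2.
Qed.

Lemma lam_eq i : lam i = dot (col i Q) (V *m col i Q).
Proof. by rewrite HV dotZr col_unit mulr1. Qed.

Variables (L M : R).
Hypothesis HL : forall j, L <= lam j.
Hypothesis HM : forall j, lam j <= M.

Lemma rayleigh_lo x : L * dot x x <= dot x (V *m x).
Proof.
rewrite quadE -normsum mulr_sumr; apply: ler_sum => j _.
by apply: ler_wpM2r; [rewrite sqr_ge0|].
Qed.

Lemma rayleigh_hi x : dot x (V *m x) <= M * dot x x.
Proof.
rewrite quadE -normsum mulr_sumr; apply: ler_sum => j _.
by apply: ler_wpM2r; [rewrite sqr_ge0|].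
Qed.

Lemma eig_bounds a : eigenvalue V a -> L <= a <= M.
Proof.
move=> /eigenvalueP [v Hv vn0].
set x := v^T.
have Vx : V *m x = a *: x by rewrite /x -{1}Vsym -trmx_mul Hv linearZ.
have xpos : 0 < dot x x.
  rewrite lt_def dot_ge0 andbT; apply/eqP => /dot_eq0 x0.
  by move: vn0; rewrite -(trmxK v) -/x x0 trmx0 eqxx.
have h1 := rayleigh_lo x; have h2 := rayleigh_hi x.
rewrite Vx dotZr in h1 h2.
by rewrite -(ler_pM2r xpos) h1 -(ler_pM2r xpos) h2.
Qed.

Lemma eig_lam i : eigenvalue V (lam i).
Proof.
apply/eigenvalueP; exists (col i Q)^T.
  by rewrite -{1}Vsym -trmx_mul HV linearZ.
apply/eqP => h; have := col_unit i.
by rewrite -(trmxK (col i Q)) h trmx0 /dot trmx0 mul0mx mxE => /eqP; rewrite eq_sym oner_eq0.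
Qed.

End Spec.

Section Step.
Variable R : realType.
Variable n : nat.

Lemma split_last (F : 'I_n.+2 -> R) :
  \sum_j F j = \sum_(j < n.+2 | (j < n.+1)%N) F j + F ord_max.
Proof.
rewrite (bigD1 ord_max) //= addrC; congr (_ + _); apply: eq_bigl => j.
by rewrite -val_eqE /= ltn_neqAle -ltnS ltn_ord andbT.
Qed.

Lemma sum_const2 :
  \sum_(j < n.+2 | (j < n.+1)%N) (2 : R) = 2 * n.+1%:R.
Proof.
have := split_last (fun _ => 2); rewrite sumr_const card_ord => h.
rewrite mulrS in h. rewrite mulr_natr. lra.
Qed.

Variables (c : 'cV[R]_n.+2) (omega : R) (V V' Q Q' : 'M[R]_n.+2)
  (lam lam' : 'I_n.+2 -> R).
Hypothesis Hc : dot c c = 1.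
Hypothesis Hom : 0 <= omega.
Hypothesis HQ : Q^T *m Q = 1%:M.
Hypothesis HV : forall i, V *m col i Q = lam i *: col i Q.
Hypothesis Hs : forall i j : 'I_n.+2, (i <= j)%N -> lam i <= lam j.
Hypothesis HQ' : Q'^T *m Q' = 1%:M.
Hypothesis HV' : forall i, V' *m col i Q' = lam' i *: col i Q'.
Hypothesis HL2 : 2 <= lam ord0.
Hypothesis Hstep : V' = V + omega *:
     \sum_(i < n.+2 | (i < n.+1)%N)
        (let ap := normalize (c + (Num.sqrt (lam ord0))^-1 *: col i Q) in
         let am := normalize (c - (Num.sqrt (lam ord0))^-1 *: col i Q) in
         ap *m ap^T + am *m am^T).

Let P i := (let ap := normalize (c + (Num.sqrt (lam ord0))^-1 *: col i Q) in
         let am := normalize (c - (Num.sqrt (lam ord0))^-1 *: col i Q) in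
         ap *m ap^T + am *m am^T).

Lemma quad_step x : dot x (V' *m x) =
  dot x (V *m x) + omega * \sum_(i < n.+2 | (i < n.+1)%N)
    (dot x (normalize (c + (Num.sqrt (lam ord0))^-1 *: col i Q)) ^+ 2 +
     dot x (normalize (c - (Num.sqrt (lam ord0))^-1 *: col i Q)) ^+ 2).
Proof.
rewrite Hstep mulmxDl dotDr -scalemxAl dotZr mulmx_suml dot_sum.
congr (_ + _ * _); apply: eq_bigr => i _ /=.
by rewrite mulmxDl dotDr !dot_outer.
Qed.

Lemma Lpos : 0 < lam ord0.
Proof. by apply: lt_le_trans HL2. Qed.

Lemma lower_i x i : dot x x = 1 ->
  2 / 3 / lam ord0 * dot (col i Q) x ^+ 2 <=
    dot x (normalize (c + (Num.sqrt (lam ord0))^-1 *: col i Q)) ^+ 2 +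
    dot x (normalize (c - (Num.sqrt (lam ord0))^-1 *: col i Q)) ^+ 2.
Proof.
move=> Hx.
set L := lam ord0; set r := Num.sqrt L; set w := r^-1; set v := col i Q.
have rpos : 0 < r by rewrite sqrtr_gt0 Lpos.
have rr : r ^+ 2 = L by rewrite sqr_sqrtr // ltW // Lpos.
have wr : w * r = 1 by rewrite mulVf // gt_eqF.
have wpos : 0 < w by rewrite invr_gt0.
have vv : dot v v = 1 by apply: col_unit.
have beta : dot c v ^+ 2 <= 1 by have := CS c v; rewrite Hc vv mulr1.
have zz_le : forall e : R, e ^+ 2 = 1 ->
    dot (c + (e * w) *: v) (c + (e * w) *: v) <= 3.
  move=> e he; rewrite !(dotDl, dotDr, dotZl, dotZr) Hc vv (dotC v c).
  have hL : 2 <= r ^+ 2 by rewrite rr.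
  have h1 : (w * r) ^+ 2 = 1 by rewrite wr expr1n.
  have h2 : (w * dot c v) ^+ 2 <= w ^+ 2 by rewrite exprMn; nra.
  have h3 : w ^+ 2 <= 1/2 by nra.
  have h4 : (e * w * dot c v) ^+ 2 <= 1/2 by rewrite -mulrA exprMn he mul1r; lra.
  have h5 : e * w * dot c v <= 3/4 by nra.
  have h6 : e * w * (e * w * 1) = w ^+ 2 by rewrite mulr1 mulrACA -!expr2 he mul1r.
  rewrite h6; lra.
have lb : forall e : R, e ^+ 2 = 1 ->
    dot x (c + (e * w) *: v) ^+ 2 / 3 <=
    dot x (normalize (c + (e * w) *: v)) ^+ 2.
  move=> e he; rewrite dot_normalize.
  set z := c + (e * w) *: v.
  have := zz_le e he; rewrite -/z => hz.
  have cs := CS x z; rewrite Hx mul1r in cs.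
  have [z0|zn0] := eqVneq (dot z z) 0.
    rewrite z0 in cs; have : dot x z ^+ 2 = 0.
      by apply/eqP; rewrite eq_le cs sqr_ge0.
    by move=> ->; rewrite !mul0r.
  have zp : 0 < dot z z by rewrite lt_def zn0 dot_ge0.
  have ginv : (dot z z)^-1 * dot z z = 1 by rewrite mulVf.
  have : 3^-1 <= (dot z z)^-1.
    rewrite lef_pV2 ?posrE //; lra.
  move=> hi; apply: ler_wpM2l => //; exact: sqr_ge0.
have e1 := lb 1 (expr1n _ _); rewrite mul1r in e1.
have m1 : (-1 : R) ^+ 2 = 1 by rewrite sqrrN expr1n.
have e2 := lb (-1) m1; rewrite mulN1r scaleNr in e2.
rewrite -/L -/r -/w -/v.
apply: le_trans (lerD e1 e2).
rewrite dotDr dotBr !dotZr (dotC x v).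
have hLw : L * w ^+ 2 = 1 by rewrite -rr -exprMn mulrC wr expr1n.
set p := dot x c; set q := dot v x.
have -> : 2 / 3 / L * q ^+ 2 = 2 / 3 * w ^+ 2 * q ^+2.
  by rewrite /w exprVn rr.
nra.
Qed.

Lemma step_lo : exists S s : R, [/\ 0 <= S, 0 <= s, S + s = 1 &
  S * lam ord0 + s * lam ord_max + omega * (2 / 3 / lam ord0) * S <= lam' ord0].
Proof.
set x := col ord0 Q'.
have Hx : dot x x = 1 by apply: (@col_unit _ _ Q' HQ').
set y := fun j => dot (col j Q) x.
exists (\sum_(j < n.+2 | (j < n.+1)%N) y j ^+ 2), (y ord_max ^+ 2).
split.
- by apply: sumr_ge0 => j _; rewrite sqr_ge0.
- by rewrite sqr_ge0.
- by rewrite -split_last /y (@normsum _ _ Q HQ).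
rewrite (@lam_eq _ _ V' Q' lam' HQ' HV') -/x quad_step.
rewrite (@quadE _ _ V Q lam HQ HV) split_last.
apply: lerD; first apply: lerD.
  rewrite mulr_suml; apply: ler_sum => j _; rewrite mulrC.
  by apply: ler_wpM2r; [rewrite sqr_ge0| apply: Hs].
- by rewrite mulrC.
- rewrite -mulrA; apply: ler_wpM2l => //.
  rewrite mulr_sumr; apply: ler_sum => j _; exact: lower_i.
Qed.

Lemma step_hi : lam' ord_max <= lam ord_max + omega * (2 * n.+1%:R).
Proof.
set x := col ord_max Q'.
have Hx : dot x x = 1 by apply: (@col_unit _ _ Q' HQ').
rewrite (@lam_eq _ _ V' Q' lam' HQ' HV') -/x quad_step.
apply: lerD.
  have := @rayleigh_hi _ _ V Q lam HQ HV (lam ord_max) _ x.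
  rewrite Hx mulr1; apply => j; apply: Hs; rewrite -ltnS; exact: ltn_ord.
apply: ler_wpM2l => //; rewrite -sum_const2; apply: ler_sum => i _.
have h : forall z, dot x (normalize z) ^+ 2 <= 1.
  move=> z; apply: le_trans (CS _ _) _; rewrite Hx mul1r.
  exact: dot_normalize_le1.
have := lerD (h (c + (Num.sqrt (lam ord0))^-1 *: col i Q))
   (h (c - (Num.sqrt (lam ord0))^-1 *: col i Q)).
by have -> : (1 + 1 : R) = 2 by [].
Qed.
End Step.
Arguments step_lo {R n c omega V V' Q Q' lam lam'}.
Arguments step_hi {R n c omega V V' Q Q' lam lam'}.

Lemma arith_inv (R : realType) (al m om L M L' M' S s l0 : R) :
  0 < al -> al * m = 2 / 3 -> 2 <= l0 -> l0 <= L -> L <= M ->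
  al * M <= L ^+ 2 -> 0 <= om -> om * (4 / 3) <= M ^+ 2 - al * M ->
  0 <= S -> 0 <= s -> S + s = 1 ->
  S * L + s * M + om * (2 / 3 / L) * S <= L' -> M' <= M + om * (2 * m) ->
  l0 <= L' /\ al * M' <= L' ^+ 2.
Proof.
move=> alp alm l02 l0L LM inv omp hM Sp sp Ss hL' hM'.
have Lp : 0 < L by lra.
set w := om / L.
have wp : 0 <= w by rewrite /w divr_ge0 // ltW.
have omw : om = w * L by rewrite /w -mulrA mulVf ?mulr1 // gt_eqF.
have e1 : om * (2 / 3 / L) = 2 / 3 * w by rewrite /w mulrCA mulrA.
rewrite e1 in hL'.
set A := L + 2 / 3 * w.
have hA : S * A + s * M <= L' by rewrite /A; lra.
have LAA : L <= A by rewrite /A; lra.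
have hM2 : al * M' <= al * M + om * (4 / 3).
  have : al * M' <= al * (M + om * (2 * m)) by rewrite ler_pM2l.
  have -> : al * (M + om * (2 * m)) = al * M + om * 2 * (al * m) by ring.
  rewrite alm; lra.
have [AM|MA] := lerP A M.
  have h1 : s * A <= s * M by apply: ler_wpM2l.
  have h2 : S * A + s * A = A by rewrite -mulrDl Ss mul1r.
  have LA : A <= L' by lra.
  split; first lra.
  have A2 : L ^+ 2 + om * (4 / 3) <= A ^+ 2 by rewrite /A omw; nra.
  have : A ^+ 2 <= L' ^+ 2 by rewrite ler_sqr ?nnegrE; lra.
  lra.
have h1 : S * M <= S * A by apply: ler_wpM2l => //; apply: ltW.
have h2 : S * M + s * M = M by rewrite -mulrDl Ss mul1r.
have ML : M <= L' by lra.
split; first lra.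
have : M ^+ 2 <= L' ^+ 2 by rewrite ler_sqr ?nnegrE; lra.
lra.
Qed.

Lemma cond_C (R : realType) (al sg C l0 M om m sM : R) :
  1 <= m -> al * (3 * m) = 2 -> sg ^+ 2 = al -> 0 <= sg -> 0 < C ->
  sg * (2 * (m + 1) * C) + al <= l0 -> 2 <= l0 -> l0 <= M ->
  0 <= om -> om <= C * sM -> sM ^+ 2 = M -> 0 <= sM ->
  om * (4 / 3) <= M ^+ 2 - al * M.
Proof.
move=> m1 al3 sgal sg0 C0 hl0 l02 l0M om0 omC sMM sM0.
set u := sM * sg * (2 * (m + 1)).
have u0 : 0 <= u by rewrite /u !mulr_ge0 //; lra.
have alp : 0 < al by nra.
have u2 : u ^+ 2 = M * al * (4 * (m + 1) ^+ 2).
  by rewrite /u !exprMn sMM sgal; ring.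
have u2' : 16 / 9 <= u ^+ 2.
  rewrite u2.
  have : 2 * al * (4 * (m + 1) ^+ 2) <= M * al * (4 * (m + 1) ^+ 2).
    apply: ler_wpM2r; first by rewrite mulr_ge0 // sqr_ge0.
    by apply: ler_wpM2r; lra.
  suff : 16 / 9 <= 2 * al * (4 * (m + 1) ^+ 2) by lra.
  nra.
have u43 : 4 / 3 <= u by nra.
have h1 : M * (sg * (2 * (m + 1) * C)) <= M ^+ 2 - al * M by nra.
have h2 : M * (sg * (2 * (m + 1) * C)) = sM * (u * C).
  by rewrite /u -sMM; ring.
have : sM * (4 / 3 * C) <= sM * (u * C).
  by apply: ler_wpM2l => //; apply: ler_wpM2r; lra.
nra.
Qed.

Section LM.
Local Open Scope classical_set_scope.
Lemma lmin_lmax (R : realType) (k : nat) (V Q : 'M[R]_k.+1) (lam : 'I_k.+1 -> R) :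
  Q^T *m Q = 1%:M -> (forall i, V *m col i Q = lam i *: col i Q) ->
  (forall i j : 'I_k.+1, (i <= j)%N -> lam i <= lam j) ->
  lmin V = lam ord0 /\ lmax V = lam ord_max.
Proof.
move=> HQ HV Hs.
have HL : forall j, lam ord0 <= lam j by move=> j; apply: Hs.
have HM : forall j, lam j <= lam ord_max by move=> j; apply: Hs; exact: leq_ord.
have bnd := @eig_bounds _ _ V Q lam HQ HV _ _ HL HM.
have e0 := @eig_lam _ _ V Q lam HQ HV ord0.
have e1 := @eig_lam _ _ V Q lam HQ HV ord_max.
set E := [set a : R | eigenvalue V a].
have lb : lbound E (lam ord0) by move=> a /bnd /andP [].
have ub : ubound E (lam ord_max) by move=> a /bnd /andP [].
have ne : E !=set0 by exists (lam ord0).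
split.
  apply/le_anti/andP; split; last exact: lb_le_inf.
  by apply: (ge_inf (ex_intro _ _ lb)).
apply/le_anti/andP; split; first exact: ge_sup.
by apply: (ub_le_sup (ex_intro _ _ ub)).
Qed.
End LM.
Arguments lmin_lmax {R k V Q lam}.

Theorem theorem2 (R : realType) (n : nat)
  (c : nat -> 'cV[R]_n.+2)
  (omega : 'M[R]_n.+2 -> R) (C lambda0 : R)
  (V : nat -> 'M[R]_n.+2) (lam : nat -> 'I_n.+2 -> R) (Q : nat -> 'M[R]_n.+2) :
  (forall t, norm2 (c t) = 1) ->
  0 < C ->
  (forall X, psd X -> 0 <= omega X /\ omega X <= C * Num.sqrt (lmax X)) ->
  Num.max 2 (Num.sqrt (2 / (3 * n.+1%:R)) * (2 * n.+2%:R * C) + 2 / (3 * n.+1%:R))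
    <= lambda0 ->
  (forall t, (Q t)^T *m Q t = 1%:M) ->
  (forall t (i : 'I_n.+2), V t *m col i (Q t) = lam t i *: col i (Q t)) ->
  (forall t (i j : 'I_n.+2), (i <= j)%N -> lam t i <= lam t j) ->
  V 0%N = lambda0%:M ->
  (forall t, V t.+1 = V t + omega (V t) *:
     \sum_(i < n.+2 | (i < n.+1)%N)
        (let ap := normalize (c t + (Num.sqrt (lam t ord0))^-1 *: col i (Q t)) in
         let am := normalize (c t - (Num.sqrt (lam t ord0))^-1 *: col i (Q t)) in
         ap *m ap^T + am *m am^T)) ->
  forall t, Num.sqrt (2 / (3 * n.+1%:R) * lmax (V t)) <= lmin (V t).
Proof.
move=> Hc C0 Hom Hl0 HQ HV Hs HV0 Hstep.
set m : R := n.+1%:R.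
set al : R := 2 / (3 * m).
set sg : R := Num.sqrt al.
have m1 : 1 <= m by rewrite /m ler1n.
have al3 : al * (3 * m) = 2 by rewrite /al mulrVK // unitfE; lra.
have alm : al * m = 2 / 3.
  apply: (@mulIf _ 3); first by lra.
  by rewrite -mulrA (mulrC m) al3 mulrVK // unitfE; lra.
have alp : 0 < al by nra.
have sgal : sg ^+ 2 = al by rewrite sqr_sqrtr // ltW.
have sg0 : 0 <= sg by apply: sqrtr_ge0.
have dm : n.+2%:R = m + 1 :> R by rewrite /m -natr1.
move: Hl0; rewrite ge_max => /andP [l02 hl0].
rewrite -/m -/al -/sg dm in hl0.
have spec := fun t => lmin_lmax (HQ t) (HV t) (Hs t).
set Inv := fun t => lambda0 <= lam t ord0 /\ al * lam t ord_max <= lam t ord0 ^+ 2.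
have LM : forall t, lam t ord0 <= lam t ord_max by move=> t; apply: Hs.
have Hpsd : forall t, 0 <= lam t ord0 -> psd (V t).
  move=> t L0; split; first exact: (@Vsym _ _ _ _ _ (HQ t) (HV t)).
  move=> v; rewrite -mulmxA -/(dot v (V t *m v)).
  apply: le_trans (@rayleigh_lo _ _ _ _ _ (HQ t) (HV t) (lam t ord0) _ v).
    by apply: mulr_ge0 => //; apply: dot_ge0.
  by move=> j; apply: Hs.
have inv : forall t, Inv t.
  elim => [|t [IH1 IH2]].
    have e : forall i, lam 0%N i = lambda0.
      move=> i; rewrite (@lam_eq _ _ _ _ _ (HQ 0%N) (HV 0%N)) HV0 mul_scalar_mx.
      by rewrite dotZr (@col_unit _ _ _ (HQ 0%N)) mulr1.
    rewrite /Inv !e; split => //.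
    have : al <= lambda0 by nra.
    by move=> h; rewrite expr2; apply: ler_wpM2r => //; lra.
  have L2 : 2 <= lam t ord0 by lra.
  have cc : dot (c t) (c t) = 1.
    have := Hc t; rewrite norm2_dot => h.
    by rewrite -(@sqr_sqrtr _ (dot (c t) (c t))) ?dot_ge0 // h expr1n.
  have [om0 omC] := Hom _ (Hpsd t (le_trans (ler0n _ 2) L2)).
  rewrite (proj2 (spec t)) in omC.
  have [S [s [S0 s0 Ss hlo]]] :=
    step_lo cc om0 (HQ t) (HV t) (Hs t) (HQ t.+1) (HV t.+1) L2 (Hstep t).
  have hhi := step_hi om0 (HQ t) (HV t) (Hs t) (HQ t.+1) (HV t.+1) (Hstep t).
  have cC : omega (V t) * (4 / 3) <= lam t ord_max ^+ 2 - al * lam t ord_max.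
    have H := @cond_C R al sg C lambda0 (lam t ord_max) (omega (V t)) m (Num.sqrt (lam t ord_max)) m1 al3 sgal sg0 C0 hl0 l02.
    apply: H => //.
    - by apply: le_trans (LM t).
    - by rewrite sqr_sqrtr //; apply: le_trans (LM t); lra.
    - exact: sqrtr_ge0.
  have H := @arith_inv _ _ _ _ _ _ _ _ _ _ _ alp alm l02 IH1 (LM t) IH2 om0 cC S0 s0 Ss hlo hhi.
  exact: H.
move=> t; have [-> ->] := spec t; have [I1 I2] := inv t.
apply: le_trans (ler_wsqrtr I2) _.
by rewrite sqrtr_sqr ger0_norm //; lra.
Qed.
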